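(* Let $f:\mathbb{R}\to\mathbb{R}$ be twice continuously differentiable and let $u_L<u_U$ be such that $f$ is strictly convex or strictly concave on $[u_L,u_U]$, i.e. either $f''>0$ on $(u_L,u_U)$ or $f''<0$ on $(u_L,u_U)$. For $u_1\neq u_2$ in $[u_L,u_U]$ let $a(u_1,u_2)$ be the nonlinear average defined below. Then for all $u_1,u_2\in[u_L,u_U]$: (1) $a(u_1,u_2)$ is the same whether computed with $f$ or with $-f$; (2) $a$ is symmetric: $a(u_1,u_2)=a(u_2,u_1)$; (3) $a$ is an average: for $u_1\neq u_2$, $a(u_1,u_2)$ lies strictly between $u_1$ and $u_2$; (4) $a$ is strictly increasing in each of its two arguments; (5) $a$ is continuous at the diagonal, with $a(u_1,u_1)=u_1$, i.e. $a(v_1,v_2)\to u_1$ as $(v_1,v_2)\to(u_1,u_1)$ with $v_1\neq v_2$ in $[u_L,u_U]$.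
   Context: For $g:\mathbb{R}\to\mathbb{R}$ write $[g(u)]_{a}^{b}=g(b)-g(a)$. For $u_1\neq u_2$ (with $f'(u_1)\neq f'(u_2)$, which holds under the convexity/concavity hypothesis) the nonlinear average is $$a(u_1,u_2)=\frac{[f'(u)u-f(u)]_{u_1}^{u_2}}{[f'(u)]_{u_1}^{u_2}}=\frac{\int_{u_1}^{u_2}f''(u)\,u\,\mathrm{d}u}{\int_{u_1}^{u_2}f''(u)\,\mathrm{d}u},$$ and on the diagonal one sets $a(u,u)=u$. The function $f$ is the flux of the scalar conservation law $u_t+(f(u))_x=0$. *)

(* Defs.v *)
From Stdlib Require Import Reals Lra.
From Coquelicot Require Import Coquelicot.
Open Scope R_scope.

Definition nl_avg (f : R -> R) (u1 u2 : R) : R :=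
  if Req_EM_T u1 u2 then u1
  else ((Derive f u2 * u2 - f u2) - (Derive f u1 * u1 - f u1))
       / (Derive f u2 - Derive f u1).

(* Main.v *)
Require Import Defs.
From Stdlib Require Import Reals Lra.
From Coquelicot Require Import Coquelicot.
Open Scope R_scope.

Section Core.
Variable f : R -> R.
Variables uL uU : R.
Hypothesis Hf : forall x, ex_derive f x.
Hypothesis Hg : forall x, ex_derive (Derive f) x.
Hypothesis Hh : forall x, uL < x < uU -> Derive (Derive f) x > 0.

Definition phi x := Derive f x * x - f x.

Lemma dphi x : derivable_pt_lim phi x (Derive (Derive f) x * x).
Proof.
  apply is_derive_Reals.
  assert (H1 : is_derive f x (Derive f x)) by (apply Derive_correct; auto).
  assert (H2 : is_derive (Derive f) x (Derive (Derive f) x)) by (apply Derive_correct; auto).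
  assert (H3 := is_derive_mult (Derive f) (fun t => t) x _ 1 H2 (is_derive_id x) Rmult_comm).
  assert (H4 := is_derive_minus _ _ x _ _ H3 H1).
  unfold phi. simpl in H4. unfold plus, mult, minus, opp, plus in H4; simpl in H4.
  replace (Derive (Derive f) x * x) with (Derive (Derive f) x * x + Derive f x * 1 + - Derive f x) by ring.
  exact H4.
Qed.

Lemma dg x : derivable_pt_lim (Derive f) x (Derive (Derive f) x).
Proof. apply is_derive_Reals, Derive_correct; auto. Qed.

Lemma core x y : uL <= x -> x < y -> y <= uU ->
  0 < Derive f y - Derive f x /\
  x < (phi y - phi x) / (Derive f y - Derive f x) < y.
Proof.
  intros Hx Hxy Hy.
  destruct (MVT_cor2 (Derive f) (Derive (Derive f)) x y Hxy (fun c _ => dg c)) as [d [Hd1 Hd2]].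
  assert (HD : 0 < Derive f y - Derive f x).
  { rewrite Hd1. apply Rmult_lt_0_compat; [apply Hh; lra | lra]. }
  set (Dg := Derive f y - Derive f x) in *.
  set (Np := phi y - phi x).
  set (k t := phi t * Dg - Derive f t * Np).
  destruct (MVT_cor2 k (fun t => Derive (Derive f) t * t * Dg - Derive (Derive f) t * Np) x y Hxy) as [c [Hc1 Hc2]].
  { intros c _. unfold k. apply derivable_pt_lim_minus.
    - apply (derivable_pt_lim_scal_right phi). apply dphi.
    - apply (derivable_pt_lim_scal_right (Derive f)). apply dg. }
  assert (Hk : k y - k x = 0) by (unfold k, Np, Dg; ring).
  rewrite Hk in Hc1.
  assert (Hhc : Derive (Derive f) c > 0) by (apply Hh; lra).
  assert (E : Np = c * Dg).
  { assert (Derive (Derive f) c * (c * Dg - Np) = 0) by nra.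
    apply Rmult_integral in H. destruct H; lra. }
  split; [exact HD|]. rewrite E. unfold Rdiv. rewrite Rmult_assoc, Rinv_r by lra. lra.
Qed.
Lemma nl_eq x y : x <> y -> nl_avg f x y = (phi y - phi x) / (Derive f y - Derive f x).
Proof. intros H. unfold nl_avg, phi. destruct (Req_EM_T x y); [contradiction | reflexivity]. Qed.

Lemma pair x y : uL <= x -> x < y -> y <= uU ->
  0 < Derive f y - Derive f x /\ phi y - phi x = nl_avg f x y * (Derive f y - Derive f x)
  /\ x < nl_avg f x y < y.
Proof.
  intros Hx Hxy Hy. destruct (core x y Hx Hxy Hy) as [H1 H2].
  rewrite nl_eq by lra. split; [lra|split; [|lra]].
  field. lra.
Qed.

Lemma mediant a1 a2 D1 D2 : a1 < a2 -> 0 < D1 -> 0 < D2 ->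
  a1 < (a1*D1 + a2*D2)/(D1+D2) < a2.
Proof.
  intros. split.
  - apply Rmult_lt_reg_r with (D1+D2); [lra|]. unfold Rdiv. rewrite Rmult_assoc, Rinv_l by lra. nra.
  - apply Rmult_lt_reg_r with (D1+D2); [lra|]. unfold Rdiv. rewrite Rmult_assoc, Rinv_l by lra. nra.
Qed.

Lemma trip x y z : uL <= x -> x < y -> y < z -> z <= uU ->
  nl_avg f x y < nl_avg f x z < nl_avg f y z.
Proof.
  intros. destruct (pair x y) as [D1 [N1 B1]]; try lra.
  destruct (pair y z) as [D2 [N2 B2]]; try lra.
  rewrite (nl_eq x z) by lra.
  replace ((phi z - phi x) / (Derive f z - Derive f x)) with
    ((nl_avg f x y * (Derive f y - Derive f x) + nl_avg f y z * (Derive f z - Derive f y)) /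
     ((Derive f y - Derive f x) + (Derive f z - Derive f y))).
  - apply mediant; lra.
  - rewrite <- N1, <- N2. f_equal; ring.
Qed.
End Core.

Lemma nl_sym f x y : nl_avg f x y = nl_avg f y x.
Proof.
  unfold nl_avg. destruct (Req_EM_T x y); destruct (Req_EM_T y x); try lra.
  replace (Derive f x - Derive f y) with (- (Derive f y - Derive f x)) by ring.
  unfold Rdiv. rewrite Rinv_opp. ring.
Qed.

Lemma nl_opp f x y : nl_avg (fun x => - f x) x y = nl_avg f x y.
Proof.
  unfold nl_avg. destruct (Req_EM_T x y); [reflexivity|].
  rewrite !Derive_opp.
  replace (- Derive f y - - Derive f x) with (- (Derive f y - Derive f x)) by ring.
  unfold Rdiv. rewrite Rinv_opp. ring.
Qed.

Lemma convex_case (f : R -> R) (uL uU : R) :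
  (forall x, ex_derive f x) ->
  (forall x, ex_derive (Derive f) x) ->
  (forall x, uL < x < uU -> Derive (Derive f) x > 0) ->
  (forall u1 u2, uL <= u1 <= uU -> uL <= u2 <= uU -> u1 < u2 ->
     u1 < nl_avg f u1 u2 < u2 /\ u1 < nl_avg f u2 u1 < u2) /\
  (forall u v w, uL <= u <= uU -> uL <= v <= uU -> uL <= w <= uU -> v < w ->
     nl_avg f v u < nl_avg f w u /\ nl_avg f u v < nl_avg f u w) /\
  (forall u, uL <= u <= uU ->
     nl_avg f u u = u /\
     forall eps, 0 < eps -> exists delta, 0 < delta /\
       forall v1 v2, uL <= v1 <= uU -> uL <= v2 <= uU -> v1 <> v2 ->
         Rabs (v1 - u) < delta -> Rabs (v2 - u) < delta ->
         Rabs (nl_avg f v1 v2 - u) < eps).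
Proof.
  intros Hf Hg Hh.
  assert (B : forall u1 u2, uL <= u1 <= uU -> uL <= u2 <= uU -> u1 < u2 ->
     u1 < nl_avg f u1 u2 < u2 /\ u1 < nl_avg f u2 u1 < u2).
  { intros u1 u2 H1 H2 H12. destruct (pair f uL uU Hf Hg Hh u1 u2) as [_ [_ P]]; try lra.
    rewrite (nl_sym f u2 u1). tauto. }
  assert (Duu : forall u, nl_avg f u u = u).
  { intros u; unfold nl_avg; destruct (Req_EM_T u u); [reflexivity|contradiction]. }
  split; [exact B|]. split.
  - intros u v w Hu Hv Hw Hvw.
    assert (nl_avg f v u < nl_avg f w u).
    { destruct (Rlt_or_le u v) as [Huv|Hvu].
      - rewrite (nl_sym f v u), (nl_sym f w u).
        destruct (trip f uL uU Hf Hg Hh u v w); lra.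
      - destruct (Rlt_or_le w u) as [Hwu|Huw].
        + destruct (trip f uL uU Hf Hg Hh v w u); lra.
        + destruct (Req_dec v u) as [->|Hne].
          * rewrite Duu. destruct (B u w); lra.
          * destruct (Req_dec w u) as [->|Hne2].
            -- rewrite Duu. destruct (B v u); lra.
            -- destruct (B v u); try lra. destruct (B u w); lra. }
    split; [assumption|]. rewrite (nl_sym f u v), (nl_sym f u w). assumption.
  - intros u Hu. split; [apply Duu|].
    intros eps Heps. exists eps. split; [lra|].
    intros v1 v2 H1 H2 H12 A1 A2.
    apply Rabs_def2 in A1. apply Rabs_def2 in A2. apply Rabs_def1.
    + destruct (Rlt_or_le v1 v2) as [L|L].
      * destruct (B v1 v2); lra.
      * destruct (B v2 v1); lra.
    + destruct (Rlt_or_le v1 v2) as [L|L].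
      * destruct (B v1 v2); lra.
      * destruct (B v2 v1); lra.
Qed.

Theorem lemma1 (f : R -> R) (uL uU : R) :
  (forall x, ex_derive f x) ->
  (forall x, ex_derive (Derive f) x) ->
  (forall x, continuous (Derive (Derive f)) x) ->
  uL < uU ->
  ((forall x, uL < x < uU -> Derive (Derive f) x > 0) \/
   (forall x, uL < x < uU -> Derive (Derive f) x < 0)) ->
  (forall u1 u2, uL <= u1 <= uU -> uL <= u2 <= uU ->
     nl_avg (fun x => - f x) u1 u2 = nl_avg f u1 u2) /\
  (forall u1 u2, uL <= u1 <= uU -> uL <= u2 <= uU ->
     nl_avg f u1 u2 = nl_avg f u2 u1) /\
  (forall u1 u2, uL <= u1 <= uU -> uL <= u2 <= uU -> u1 < u2 ->
     u1 < nl_avg f u1 u2 < u2 /\ u1 < nl_avg f u2 u1 < u2) /\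
  (forall u v w, uL <= u <= uU -> uL <= v <= uU -> uL <= w <= uU -> v < w ->
     nl_avg f v u < nl_avg f w u /\ nl_avg f u v < nl_avg f u w) /\
  (forall u, uL <= u <= uU ->
     nl_avg f u u = u /\
     forall eps, 0 < eps -> exists delta, 0 < delta /\
       forall v1 v2, uL <= v1 <= uU -> uL <= v2 <= uU -> v1 <> v2 ->
         Rabs (v1 - u) < delta -> Rabs (v2 - u) < delta ->
         Rabs (nl_avg f v1 v2 - u) < eps).
Proof.
  intros Hf Hg _ _ Hcv.
  split; [intros; apply nl_opp|]. split; [intros; apply nl_sym|].
  destruct Hcv as [Hcv|Hcc].
  - apply convex_case; assumption.
  - assert (E : forall u1 u2, nl_avg f u1 u2 = nl_avg (fun x => - f x) u1 u2)
      by (intros; symmetry; apply nl_opp).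
    assert (DE : forall x, Derive (fun x => - f x) x = - Derive f x) by (intros; apply Derive_opp).
    assert (DDE : forall x, Derive (Derive (fun x => - f x)) x = - Derive (Derive f) x).
    { intros x. rewrite <- Derive_opp. apply Derive_ext. apply DE. }
    setoid_rewrite E. apply convex_case.
    + intros x. auto_derive. auto.
    + intros x. eapply ex_derive_ext. { intros t. symmetry. apply DE. }
      auto_derive. auto.
    + intros x Hx. rewrite DDE. specialize (Hcc x Hx). lra.
Qed.
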